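(* Let $p>0$, $x\ge0$, $0<y<1$, and $q>1$. Define $$\bar c_{p,q}=\frac{p+q-1}{q}\,(1-y)\,\frac{M(p+q,p,xy/2)}{M(p+q-1,p,xy/2)}.$$ Then both $y_k=B_{p,k}(x,y)$ and $y_k=\bar B_{p,k}(x,y)$ satisfy $$y_{q+1}-(1+\bar c_{p,q})\,y_q+\bar c_{p,q}\,y_{q-1}=0 .$$
   Context: For $p,q>0$ and $0\le y\le 1$, $I_y(p,q)=\frac{1}{B(p,q)}\int_0^y t^{p-1}(1-t)^{q-1}\,dt$ is the regularized incomplete beta function, with $B(p,q)=\Gamma(p)\Gamma(q)/\Gamma(p+q)$. The cumulative noncentral beta distribution is $B_{p,q}(x,y)=e^{-x/2}\sum_{j=0}^\infty \frac{1}{j!}\left(\frac x2\right)^j I_y(p+j,q)$ for $x\ge0$, and its complement is $\bar B_{p,q}(x,y)=1-B_{p,q}(x,y)$. $M(a,b,z)=\sum_{n\ge0}\frac{(a)_n}{(b)_n}\frac{z^n}{n!}$ is Kummer's confluent hypergeometric function, and $(a)_n$ is the Pochhammer symbol. *)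

(* Defs.v *)
From Stdlib Require Import Reals Lra Arith ClassicalEpsilon.
Open Scope R_scope.

(* Value of a real quantity characterized by a predicate (default 0 if none). *)
Definition the_real (P : R -> Prop) : R := epsilon (inhabits 0) P.

Definition series_value (s : nat -> R) : R := the_real (infinite_sum s).

Definition improper_int_lim (f : R -> R) (a b l : R) : Prop :=
  forall eps, eps > 0 -> exists delta, delta > 0 /\
    forall u v, a < u < a + delta -> b - delta < v < b -> u < v ->
      exists pr : Riemann_integrable f u v, Rabs (RiemannInt pr - l) < eps.

Definition improper_int (f : R -> R) (a b : R) : R :=
  the_real (improper_int_lim f a b).

Definition beta_integrand (p q : R) (t : R) : R :=
  Rpower t (p - 1) * Rpower (1 - t) (q - 1).

Definition Beta (p q : R) : R := improper_int (beta_integrand p q) 0 1.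

Definition inc_beta_reg (y p q : R) : R :=
  improper_int (beta_integrand p q) 0 y / Beta p q.

Fixpoint pochhammer (a : R) (n : nat) : R :=
  match n with
  | O => 1
  | S m => pochhammer a m * (a + INR m)
  end.

Definition kummerM (a b z : R) : R :=
  series_value (fun n => pochhammer a n / pochhammer b n * z ^ n / INR (Factorial.fact n)).

Definition ncbeta (p q x y : R) : R :=
  exp (- x / 2) *
  series_value (fun j => / INR (Factorial.fact j) * (x / 2) ^ j * inc_beta_reg y (p + INR j) q).

Definition ncbeta_c (p q x y : R) : R := 1 - ncbeta p q x y.

Definition cbar (p q x y : R) : R :=
  (p + q - 1) / q * (1 - y) *
  (kummerM (p + q) p (x * y / 2) / kummerM (p + q - 1) p (x * y / 2)).

(* Main.v *)
Require Import Defs.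
From Stdlib Require Import Reals.
From Stdlib Require Import Lra ClassicalEpsilon Classical.
From Coquelicot Require Import Coquelicot.
Open Scope R_scope.

Lemma the_real_eq (P : R -> Prop) l : P l -> (forall l', P l' -> l' = l) -> the_real P = l.
Proof. intros H U. unfold the_real. apply U. apply epsilon_spec. eauto. Qed.

Lemma cont_of_lim (f : R -> R) x l : derivable_pt_lim f x l -> continuous f x.
Proof. intro H. apply continuity_pt_filterlim. apply derivable_continuous_pt. exists l; exact H. Qed.

Lemma exRInt_in (f : R -> R) a b u v : (forall t, a < t < b -> continuous f t) -> a < u -> u <= v -> v < b -> ex_RInt f u v.
Proof. intros C h1 h2 h3. apply (@ex_RInt_continuous R_CompleteNormedModule). intros z Hz.
  rewrite Rmin_left in Hz by lra. rewrite Rmax_right in Hz by lra. apply C; lra. Qed.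

Definition lim2 (f : R -> R) a b l := forall eps, 0 < eps -> exists d, 0 < d /\
  forall u v, a < u < a + d -> b - d < v < b -> u < v -> Rabs (RInt f u v - l) < eps.

Lemma lim2_imp (f : R -> R) a b l : (forall t, a < t < b -> continuous f t) -> lim2 f a b l -> improper_int_lim f a b l.
Proof. intros C H eps He. destruct (H eps He) as [d [Hd Hw]]. exists d; split; auto.
  intros u v Hu Hv Huv.
  assert (E : ex_RInt f u v). { apply (exRInt_in f a b); try lra. auto. }
  exists (ex_RInt_Reals_0 _ _ _ E). rewrite <- RInt_Reals. apply Hw; auto. Qed.

Lemma imp_unique (f : R -> R) a b l1 l2 : a < b -> improper_int_lim f a b l1 -> improper_int_lim f a b l2 -> l1 = l2.
Proof. intros Hab H1 H2. apply NNPP; intro Hne.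
  assert (He : 0 < Rabs (l1 - l2) / 2) by (apply Rdiv_lt_0_compat; [apply Rabs_pos_lt; lra| lra]).
  destruct (H1 _ He) as [d1 [Hd1 W1]]. destruct (H2 _ He) as [d2 [Hd2 W2]].
  set (d := Rmin (Rmin d1 d2) (b - a)).
  assert (Hd : 0 < d) by (unfold d; repeat apply Rmin_glb_lt; lra).
  assert (d <= d1 /\ d <= d2 /\ d <= b - a) as [A1 [A2 A3]] by
    (unfold d; repeat split; [eapply Rle_trans; [apply Rmin_l|apply Rmin_l] | eapply Rle_trans; [apply Rmin_l|apply Rmin_r] | apply Rmin_r]).
  destruct (W1 (a + d/3) (b - d/3)) as [pr1 E1]; try lra.
  destruct (W2 (a + d/3) (b - d/3)) as [pr2 E2]; try lra.
  rewrite (RiemannInt_P5 pr1 pr2) in E1.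
  assert (Rabs (l1 - l2) <= Rabs (RiemannInt pr2 - l1) + Rabs (RiemannInt pr2 - l2)).
  { replace (l1 - l2) with (-(RiemannInt pr2 - l1) + (RiemannInt pr2 - l2)) by ring.
    eapply Rle_trans; [apply Rabs_triang|]. rewrite Rabs_Ropp. lra. }
  lra. Qed.

Lemma improper_int_eq (f : R -> R) a b l : a < b -> (forall t, a < t < b -> continuous f t) -> lim2 f a b l -> improper_int f a b = l.
Proof. intros Hab C H. unfold improper_int. apply the_real_eq.
  - apply lim2_imp; auto.
  - intros l' H'. apply (imp_unique f a b); auto. apply lim2_imp; auto. Qed.

Lemma lim2_sup (f : R -> R) a b M : a < b -> (forall t, a < t < b -> continuous f t) ->
  (forall t, a < t < b -> 0 <= f t) ->
  (forall u v, a < u < v -> v < b -> RInt f u v <= M) ->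
  exists l, lim2 f a b l /\ (forall u v, a < u < v -> v < b -> RInt f u v <= l)
     /\ (forall M', (forall u v, a < u < v -> v < b -> RInt f u v <= M') -> l <= M').
Proof. intros Hab C P B.
  set (E := fun z => exists u v, a < u < v /\ v < b /\ z = RInt f u v).
  assert (BE : bound E) by (exists M; intros z [u [v [h1 [h2 ->]]]]; apply B; auto).
  assert (NE : exists z, E z) by (exists (RInt f (a + (b-a)/3) (a + 2*(b-a)/3));
     exists (a + (b-a)/3), (a + 2*(b-a)/3); repeat split; lra).
  destruct (completeness E BE NE) as [l [Hub Hlub]].
  exists l. split; [|split].
  - intros eps He.
    assert (exists z, E z /\ l - eps < z) as [z [[u0 [v0 [h1 [h2 ->]]]] Hz]].
    { apply NNPP; intro N. assert (l <= l - eps); [|lra]. apply Hlub. intros z Ez.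
      apply Rnot_lt_le. intro L. apply N. eauto. }
    exists (Rmin (u0 - a) (b - v0)). split; [apply Rmin_glb_lt; lra|].
    intros u v Hu Hv Huv.
    assert (Rmin (u0 - a) (b - v0) <= u0 - a) by apply Rmin_l.
    assert (Rmin (u0 - a) (b - v0) <= b - v0) by apply Rmin_r.
    assert (I1 : ex_RInt f u u0) by (apply (exRInt_in f a b); [exact C|lra..]).
    assert (I2 : ex_RInt f u0 v0) by (apply (exRInt_in f a b); [exact C|lra..]).
    assert (I3 : ex_RInt f v0 v) by (apply (exRInt_in f a b); [exact C|lra..]).
    assert (EQ : RInt f u v = RInt f u u0 + RInt f u0 v0 + RInt f v0 v).
    { rewrite <- (RInt_Chasles f u v0 v), <- (RInt_Chasles f u u0 v0); auto.
      apply (ex_RInt_Chasles f u u0 v0); auto. }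
    assert (0 <= RInt f u u0) by (apply RInt_ge_0; auto; try lra; intros; apply P; lra).
    assert (0 <= RInt f v0 v) by (apply RInt_ge_0; auto; try lra; intros; apply P; lra).
    assert (RInt f u v <= l) by (apply Hub; exists u, v; repeat split; lra).
    rewrite Rabs_left1; lra.
  - intros u v h1 h2. apply Hub. exists u, v; repeat split; lra.
  - intros M' HM. apply Hlub. intros z [u [v [h1 [h2 ->]]]]. apply HM; auto.
Qed.

Lemma zero_of_small z : (forall eps, 0 < eps -> Rabs z < eps) -> z = 0.
Proof. intro H. apply NNPP; intro N. assert (0 < Rabs z) by (apply Rabs_pos_lt; auto).
  specialize (H _ H0). lra. Qed.

Lemma Rpower_pos x y : 0 < Rpower x y.
Proof. unfold Rpower. apply exp_pos. Qed.

Lemma exp_le' a b : a <= b -> exp a <= exp b.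
Proof. intro H. destruct (Req_dec a b) as [->|N]; [lra|]. left; apply exp_increasing; lra. Qed.

Lemma deriv_1m s t : t < 1 -> derivable_pt_lim (fun t => Rpower (1 - t) s) t (- (s * Rpower (1 - t) (s - 1))).
Proof. intro Ht.
  assert (H1 : derivable_pt_lim (fun t => 1 - t) t (0 - 1)).
  { apply (derivable_pt_lim_minus (fun _ => 1) (fun t => t)). apply derivable_pt_lim_const. apply derivable_pt_lim_id. }
  assert (H2 := derivable_pt_lim_comp (fun t => 1 - t) (fun z => Rpower z s) t _ _ H1 (derivable_pt_lim_power (1 - t) s ltac:(lra))).
  unfold comp in H2. replace (- (s * Rpower (1 - t) (s - 1))) with (s * Rpower (1 - t) (s - 1) * (0 - 1)) by ring. exact H2. Qed.

Lemma deriv_pp r s t : 0 < t < 1 -> derivable_pt_lim (fun t => Rpower t r * Rpower (1-t) s) t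
  (r * Rpower t (r-1) * Rpower (1-t) s - s * Rpower t r * Rpower (1-t) (s-1)).
Proof. intro Ht.
  assert (H := derivable_pt_lim_mult (fun t => Rpower t r) (fun t => Rpower (1 - t) s) t _ _
     (derivable_pt_lim_power t r ltac:(lra)) (deriv_1m s t ltac:(lra))).
  replace (r * Rpower t (r-1) * Rpower (1-t) s - s * Rpower t r * Rpower (1-t) (s-1)) with
   (r * Rpower t (r - 1) * Rpower (1 - t) s + Rpower t r * - (s * Rpower (1 - t) (s - 1))) by ring.
  exact H. Qed.

Lemma beta_cont a b t : 0 < t < 1 -> continuous (beta_integrand a b) t.
Proof. intro Ht. eapply cont_of_lim. apply (deriv_pp (a-1) (b-1) t Ht). Qed.

Lemma beta_pos a b t : 0 <= beta_integrand a b t.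
Proof. unfold beta_integrand. left. apply Rmult_lt_0_compat; apply Rpower_pos. Qed.

Lemma pow_small c eps : 0 < c -> 0 < eps -> exists d, 0 < d /\ forall s, 0 < s < d -> Rpower s c < eps.
Proof. intros Hc He. exists (Rpower eps (/ c)). split; [apply Rpower_pos|].
  intros s Hs. replace eps with (Rpower (Rpower eps (/c)) c) at 1.
  - unfold Rpower at 1 2. apply exp_increasing. apply Rmult_lt_compat_l; auto. apply ln_increasing; lra.
  - rewrite Rpower_mult. replace (/ c * c) with 1 by (field; lra). apply Rpower_1; auto. Qed.

Lemma Rpower_1base c : Rpower 1 c = 1.
Proof. unfold Rpower. rewrite ln_1, Rmult_0_r. apply exp_0. Qed.

Lemma pow_le1 s c : 0 < s <= 1 -> 0 <= c -> Rpower s c <= 1.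
Proof. intros Hs Hc. rewrite <- (Rpower_1base c). apply Rle_Rpower_l; lra. Qed.

Lemma pow_bound s e : /2 <= s <= 1 -> Rpower s e <= exp (Rabs e * ln 2).
Proof. intro Hs. unfold Rpower. apply exp_le'.
  assert (L1 : ln s <= 0) by (rewrite <- ln_1; apply ln_le; lra).
  assert (L2 : - ln 2 <= ln s) by (rewrite <- ln_Rinv by lra; apply ln_le; lra).
  eapply Rle_trans; [apply Rle_abs|]. rewrite Rabs_mult. apply Rmult_le_compat_l; [apply Rabs_pos|].
  rewrite Rabs_left1; lra. Qed.
Lemma lin_deriv (f g : R -> R) C a b t l1 l2 : is_derive f t l1 -> is_derive g t l2 ->
  is_derive (fun x => C*(f x / a - g x / b)) t (C*(l1/a - l2/b)).
Proof. intros H1 H2. auto_derive.  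
  - split; [exists l1; exact H1|split; [exists l2; exact H2|exact I]].
  - replace (Derive (fun x => f x) t) with l1 by (symmetry; apply is_derive_unique; exact H1).
    replace (Derive (fun x => g x) t) with l2 by (symmetry; apply is_derive_unique; exact H2). unfold Rdiv; ring.
Qed.

Lemma cont_g a b t : 0 < t < 1 -> continuous (fun x => Rpower x (a-1) + Rpower (1-x) (b-1)) t.
Proof. intro Ht. apply (continuous_plus (fun x => Rpower x (a-1)) (fun x => Rpower (1-x) (b-1))).
  - eapply cont_of_lim. apply derivable_pt_lim_power; lra.
  - eapply cont_of_lim. apply deriv_1m; lra. Qed.

Lemma beta_bound a b : 0 < a -> 0 < b -> exists M, forall u v, 0 < u < v -> v < 1 ->
  RInt (beta_integrand a b) u v <= M.
Proof. intros Ha Hb.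
  set (C1 := exp (Rabs (a-1) * ln 2)). set (C2 := exp (Rabs (b-1) * ln 2)).
  assert (P1 : 0 < C1) by apply exp_pos. assert (P2 : 0 < C2) by apply exp_pos.
  set (C := C1 + C2).
  set (g := fun x => Rpower x (a-1) + Rpower (1-x) (b-1)).
  set (h := fun x => C * (Rpower x a / a - Rpower (1-x) b / b)).
  assert (PW : forall t, 0 < t < 1 -> beta_integrand a b t <= C * g t).
  { intros t Ht. unfold beta_integrand, g, C.
    assert (X := Rpower_pos t (a-1)). assert (Y := Rpower_pos (1-t) (b-1)).
    destruct (Rle_lt_dec t (/2)).
    - assert (Rpower (1-t) (b-1) <= C2) by (apply pow_bound; lra). nra.
    - assert (Rpower t (a-1) <= C1) by (apply pow_bound; lra). nra. }
  assert (D : forall t, 0 < t < 1 -> is_derive h t (C * g t)).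
  { intros t Ht. unfold h, g.
    replace (C * (Rpower t (a - 1) + Rpower (1 - t) (b - 1))) with
      (C * (a * Rpower t (a-1) / a - (- (b * Rpower (1-t) (b-1))) / b)) by (field; lra).
    apply lin_deriv; apply is_derive_Reals. apply derivable_pt_lim_power; lra. apply deriv_1m; lra. }
  exists (C * (/a + /b)). intros u v Huv Hv.
  assert (CG : forall t, u <= t <= v -> continuous (fun t => C * g t) t).
  { intros t Ht. apply (continuous_mult (fun _ => C) g). apply continuous_const. apply cont_g; lra. }
  assert (EI : is_RInt (fun t => C * g t) u v (minus (h v) (h u))).
  { apply (@is_RInt_derive R_CompleteNormedModule).
    - intros t Ht. rewrite Rmin_left in Ht by lra. rewrite Rmax_right in Ht by lra. apply D; lra.
    - intros t Ht. rewrite Rmin_left in Ht by lra. rewrite Rmax_right in Ht by lra. apply CG; lra. }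
  assert (EX : ex_RInt (fun t => C * g t) u v) by (eexists; exact EI).
  apply (@is_RInt_unique R_CompleteNormedModule) in EI.
  eapply Rle_trans.
  { apply RInt_le; try lra.
    - apply (exRInt_in _ 0 1); try lra. intros; apply beta_cont; auto.
    - exact EX.
    - intros t Ht. apply PW; lra. }
  rewrite EI. unfold minus, plus, opp; simpl. unfold h.
  assert (A1 : Rpower v a <= 1) by (apply pow_le1; lra).
  assert (A2 : Rpower (1-u) b <= 1) by (apply pow_le1; lra).
  assert (A3 := Rpower_pos u a). assert (A4 := Rpower_pos (1-v) b).
  assert (Rpower v a / a <= / a) by (unfold Rdiv; rewrite <- (Rmult_1_l (/a)) at 2; apply Rmult_le_compat_r; [left; apply Rinv_0_lt_compat; lra| lra]).
  assert (Rpower (1-u) b / b <= / b) by (unfold Rdiv; rewrite <- (Rmult_1_l (/b)) at 2; apply Rmult_le_compat_r; [left; apply Rinv_0_lt_compat; lra| lra]).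
  assert (0 <= Rpower u a / a) by (apply Rdiv_le_0_compat; lra).
  assert (0 <= Rpower (1-v) b / b) by (apply Rdiv_le_0_compat; lra).
  assert (0 < C) by (unfold C; lra).
  nra.
Qed.

Lemma window E d : 0 < E -> 0 < d -> exists u v, 0 < u < 0 + d /\ E - d < v < E /\ u < v.
Proof. intros HE Hd. set (m := Rmin d (E/2)).
  assert (0 < m) by (apply Rmin_glb_lt; lra). assert (m <= d) by apply Rmin_l.
  assert (m <= E/2) by apply Rmin_r.
  exists (m/2), (E - m/2). lra. Qed.

Lemma beta_props a b : 0 < a -> 0 < b -> lim2 (beta_integrand a b) 0 1 (Beta a b) /\ 0 < Beta a b /\
  (forall u v, 0 < u < v -> v < 1 -> RInt (beta_integrand a b) u v <= Beta a b).
Proof. intros Ha Hb. destruct (beta_bound a b Ha Hb) as [M HM].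
  destruct (lim2_sup (beta_integrand a b) 0 1 M ltac:(lra) ltac:(intros; apply beta_cont; auto)
    ltac:(intros; apply beta_pos) HM) as [l [L [U _]]].
  - assert (E : Beta a b = l) by (apply improper_int_eq; auto; try lra; intros; apply beta_cont; auto).
    rewrite E. split; auto. split; auto.
    apply Rlt_le_trans with (RInt (beta_integrand a b) (1/3) (2/3)); [|apply U; lra].
    apply RInt_gt_0; try lra.
    + intros; unfold beta_integrand; apply Rmult_lt_0_compat; apply Rpower_pos.
    + intros; apply beta_cont; lra. Qed.

Lemma incb_props a b y : 0 < a -> 0 < b -> 0 < y < 1 ->
  lim2 (beta_integrand a b) 0 y (improper_int (beta_integrand a b) 0 y) /\
  0 <= improper_int (beta_integrand a b) 0 y <= Beta a b.
Proof. intros Ha Hb Hy. destruct (beta_props a b Ha Hb) as [_ [_ UB]].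
  destruct (lim2_sup (beta_integrand a b) 0 y (Beta a b) ltac:(lra) ltac:(intros; apply beta_cont; lra)
    ltac:(intros; apply beta_pos) ltac:(intros u v H1 H2; apply UB; lra)) as [l [L [U LB]]].
  - assert (E : improper_int (beta_integrand a b) 0 y = l) by (apply improper_int_eq; auto; try lra; intros; apply beta_cont; lra).
    rewrite E. split; auto. split.
    + apply Rle_trans with (RInt (beta_integrand a b) (y/3) (2*y/3)); [|apply U; lra].
      apply RInt_ge_0; try lra. apply (exRInt_in _ 0 1); try lra. intros; apply beta_cont; auto.
      intros; apply beta_pos.
    + apply LB. intros u v H1 H2; apply UB; lra. Qed.

Lemma pw1 a b t : 0 < t < 1 -> beta_integrand a (b+1) t = beta_integrand a b t - beta_integrand (a+1) b t.
Proof. intro Ht. unfold beta_integrand.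
  replace (b + 1 - 1) with ((b - 1) + 1) by ring. replace (a + 1 - 1) with ((a - 1) + 1) by ring.
  rewrite !Rpower_plus, !Rpower_1 by lra. ring. Qed.

Lemma pw2 a b t : 0 < t < 1 -> a * Rpower t (a-1) * Rpower (1-t) b - b * Rpower t a * Rpower (1-t) (b-1)
  = a * beta_integrand a (b+1) t - b * beta_integrand (a+1) b t.
Proof. intro Ht. unfold beta_integrand. replace (b + 1 - 1) with b by ring. replace (a + 1 - 1) with a by ring. ring. Qed.

Lemma win1 a b u v : 0 < u < v -> v < 1 ->
  RInt (beta_integrand a (b+1)) u v = RInt (beta_integrand a b) u v - RInt (beta_integrand (a+1) b) u v.
Proof. intros H1 H2.
  assert (E1 : ex_RInt (beta_integrand a b) u v) by (apply (exRInt_in _ 0 1); try lra; intros; apply beta_cont; auto).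
  assert (E2 : ex_RInt (beta_integrand (a+1) b) u v) by (apply (exRInt_in _ 0 1); try lra; intros; apply beta_cont; auto).
  rewrite <- (RInt_minus (V := R_CompleteNormedModule)) by auto.
  apply RInt_ext. intros t Ht. rewrite Rmin_left in Ht by lra. rewrite Rmax_right in Ht by lra.
  rewrite pw1 by lra. reflexivity. Qed.

Lemma win2 a b u v : 0 < u < v -> v < 1 ->
  a * RInt (beta_integrand a (b+1)) u v - b * RInt (beta_integrand (a+1) b) u v =
  Rpower v a * Rpower (1-v) b - Rpower u a * Rpower (1-u) b.
Proof. intros H1 H2.
  assert (E1 : ex_RInt (beta_integrand a (b+1)) u v) by (apply (exRInt_in _ 0 1); try lra; intros; apply beta_cont; auto).
  assert (E2 : ex_RInt (beta_integrand (a+1) b) u v) by (apply (exRInt_in _ 0 1); try lra; intros; apply beta_cont; auto).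
  set (g := fun t => Rpower t a * Rpower (1-t) b).
  set (dg := fun t => a * beta_integrand a (b+1) t - b * beta_integrand (a+1) b t).
  assert (D : is_RInt dg u v (minus (g v) (g u))).
  { apply (@is_RInt_derive R_CompleteNormedModule).
    - intros t Ht. rewrite Rmin_left in Ht by lra. rewrite Rmax_right in Ht by lra.
      unfold dg. rewrite <- pw2 by lra. apply is_derive_Reals. apply deriv_pp. lra.
    - intros t Ht. rewrite Rmin_left in Ht by lra. rewrite Rmax_right in Ht by lra.
      unfold dg. apply (continuous_minus (fun t => a * beta_integrand a (b+1) t) (fun t => b * beta_integrand (a+1) b t)).
      + apply (continuous_mult (fun _ => a)). apply continuous_const. apply beta_cont; lra.
      + apply (continuous_mult (fun _ => b)). apply continuous_const. apply beta_cont; lra. }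
  assert (D2 : is_RInt dg u v (a * RInt (beta_integrand a (b+1)) u v - b * RInt (beta_integrand (a+1) b) u v)).
  { apply (is_RInt_minus (V := R_CompleteNormedModule) (fun t => a * beta_integrand a (b+1) t) (fun t => b * beta_integrand (a+1) b t));
    apply (is_RInt_scal (V := R_CompleteNormedModule)); apply (RInt_correct (V := R_CompleteNormedModule)); auto. }
  apply (@is_RInt_unique R_CompleteNormedModule) in D. apply (@is_RInt_unique R_CompleteNormedModule) in D2.
  rewrite <- D2, D. reflexivity. Qed.

Lemma min4 d1 d2 d3 d4 : 0 < d1 -> 0 < d2 -> 0 < d3 -> 0 < d4 ->
  exists d, 0 < d /\ d <= d1 /\ d <= d2 /\ d <= d3 /\ d <= d4.
Proof. intros. exists (Rmin (Rmin d1 d2) (Rmin d3 d4)).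
  repeat split; try (repeat apply Rmin_glb_lt; auto);
  [eapply Rle_trans; [apply Rmin_l|apply Rmin_l] | eapply Rle_trans; [apply Rmin_l|apply Rmin_r]
  |eapply Rle_trans; [apply Rmin_r|apply Rmin_l] | eapply Rle_trans; [apply Rmin_r|apply Rmin_r]]. Qed.

Lemma abs3 x y z : Rabs (x + y + z) <= Rabs x + Rabs y + Rabs z.
Proof. eapply Rle_trans; [apply Rabs_triang|]. assert (H := Rabs_triang x y). lra. Qed.

Lemma rel_gen E a b l1 l2 l3 Phi : 0 < E <= 1 -> 0 < a -> 0 < b ->
  lim2 (beta_integrand a (b+1)) 0 E l1 -> lim2 (beta_integrand a b) 0 E l2 ->
  lim2 (beta_integrand (a+1) b) 0 E l3 ->
  (forall eps, 0 < eps -> exists d, 0 < d /\ forall v, E - d < v < E ->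
      Rabs (Rpower v a * Rpower (1-v) b - Phi) < eps) ->
  l1 = l2 - l3 /\ a * l1 - b * l3 = Phi.
Proof. intros HE Ha Hb L1 L2 L3 LP. split.
  - apply Rminus_diag_uniq. apply zero_of_small. intros eps He.
    destruct (L1 (eps/3) ltac:(lra)) as [d1 [P1 W1]].
    destruct (L2 (eps/3) ltac:(lra)) as [d2 [P2 W2]].
    destruct (L3 (eps/3) ltac:(lra)) as [d3 [P3 W3]].
    destruct (min4 d1 d2 d3 1 P1 P2 P3 ltac:(lra)) as [d [Pd [Q1 [Q2 [Q3 _]]]]].
    destruct (window E d ltac:(lra) Pd) as [u [v [Hu [Hv Huv]]]].
    specialize (W1 u v ltac:(lra) ltac:(lra) Huv). specialize (W2 u v ltac:(lra) ltac:(lra) Huv).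
    specialize (W3 u v ltac:(lra) ltac:(lra) Huv).
    rewrite win1 in W1 by lra.
    replace (l1 - (l2 - l3)) with (- (RInt (beta_integrand a b) u v - RInt (beta_integrand (a + 1) b) u v - l1)
       + (RInt (beta_integrand a b) u v - l2) + - (RInt (beta_integrand (a + 1) b) u v - l3)) by ring.
    eapply Rle_lt_trans; [apply abs3|]. rewrite !Rabs_Ropp. lra.
  - apply Rminus_diag_uniq. apply zero_of_small. intros eps He.
    set (e := eps / (a + b + 3)). assert (Pe : 0 < e) by (unfold e; apply Rdiv_lt_0_compat; lra).
    assert (Ee : (a + b + 2) * e < eps).
    { assert (e * (a+b+3) = eps) by (unfold e; field; lra). nra. }
    destruct (L1 e Pe) as [d1 [P1 W1]].
    destruct (L3 e Pe) as [d3 [P3 W3]].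
    destruct (LP e Pe) as [d4 [P4 W4]].
    destruct (pow_small a e Ha Pe) as [d5 [P5 W5]].
    destruct (min4 d1 d3 d4 d5 P1 P3 P4 P5) as [d [Pd [Q1 [Q2 [Q3 Q4]]]]].
    destruct (window E d ltac:(lra) Pd) as [u [v [Hu [Hv Huv]]]].
    specialize (W1 u v ltac:(lra) ltac:(lra) Huv). specialize (W3 u v ltac:(lra) ltac:(lra) Huv).
    specialize (W4 v ltac:(lra)). specialize (W5 u ltac:(lra)).
    assert (G : 0 <= Rpower u a * Rpower (1-u) b <= Rpower u a).
    { assert (X := Rpower_pos u a). assert (Y := Rpower_pos (1-u) b).
      assert (Rpower (1-u) b <= 1) by (apply pow_le1; lra). nra. }
    assert (W := win2 a b u v ltac:(lra) ltac:(lra)).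
    set (G1 := RInt (beta_integrand a (b + 1)) u v) in *.
    set (G3 := RInt (beta_integrand (a + 1) b) u v) in *.
    replace (a * l1 - b * l3 - Phi) with (a * (-(G1 - l1)) + b * (G3 - l3) + (Rpower v a * Rpower (1 - v) b - Phi)
       - Rpower u a * Rpower (1 - u) b) by lra.
    eapply Rle_lt_trans; [apply Rabs_triang|]. rewrite Rabs_Ropp.
    eapply Rle_lt_trans; [apply Rplus_le_compat_r; apply abs3|].
    rewrite !Rabs_mult, Rabs_Ropp, (Rabs_right a), (Rabs_right b) by lra.
    rewrite <- Rabs_mult, (Rabs_right (Rpower u a * Rpower (1 - u) b)) by lra.
    nra.
Qed.

Lemma beta_rec a b : 0 < a -> 0 < b ->
  Beta a (b+1) = b / (a+b) * Beta a b /\ Beta (a+1) b = a / (a+b) * Beta a b.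
Proof. intros Ha Hb.
  destruct (beta_props a (b+1) Ha ltac:(lra)) as [L1 _].
  destruct (beta_props a b Ha Hb) as [L2 _].
  destruct (beta_props (a+1) b ltac:(lra) Hb) as [L3 _].
  destruct (rel_gen 1 a b _ _ _ 0 ltac:(lra) Ha Hb L1 L2 L3) as [R1 R2].
  - intros eps He. destruct (pow_small b eps Hb He) as [d [Pd W]]. exists (Rmin d 1); split; [apply Rmin_glb_lt; lra|].
    intros v Hv. assert (Rmin d 1 <= d) by apply Rmin_l. assert (Rmin d 1 <= 1) by apply Rmin_r. rewrite Rminus_0_r.
    assert (X := Rpower_pos v a). assert (Y := Rpower_pos (1-v) b).
    assert (Rpower v a <= 1) by (apply pow_le1; lra).
    assert (Rpower (1-v) b < eps) by (apply W; lra).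
    rewrite Rabs_right by (left; apply Rmult_lt_0_compat; auto). nra.
  - assert (E1 : Beta a (b+1) = b / (a+b) * Beta a b).
    { apply Rmult_eq_reg_r with (a + b); try lra. field_simplify; try lra. rewrite R1 in R2 |- *. nra. }
    split; auto. replace (Beta (a+1) b) with (Beta a b - Beta a (b+1)) by lra. rewrite E1. field. lra.
Qed.

Lemma cont_eps (f : R -> R) x l : derivable_pt_lim f x l ->
  forall eps, 0 < eps -> exists d, 0 < d /\ forall v, x - d < v < x -> Rabs (f v - f x) < eps.
Proof. intros H eps He.
  assert (C : continuity_pt f x) by (apply derivable_continuous_pt; exists l; exact H).
  destruct (C eps He) as [d [Pd W]]. exists d; split; auto. intros v Hv.
  apply (W v). split. split. exact I. lra. simpl. unfold Rdist. rewrite Rabs_left1; lra. Qed.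

Lemma incb_rec a b y : 0 < a -> 0 < b -> 0 < y < 1 ->
  inc_beta_reg y a (b+1) = inc_beta_reg y a b + Rpower y a * Rpower (1-y) b / (b * Beta a b).
Proof. intros Ha Hb Hy.
  destruct (incb_props a (b+1) y Ha ltac:(lra) Hy) as [L1 _].
  destruct (incb_props a b y Ha Hb Hy) as [L2 _].
  destruct (incb_props (a+1) b y ltac:(lra) Hb Hy) as [L3 _].
  destruct (rel_gen y a b _ _ _ (Rpower y a * Rpower (1-y) b) ltac:(lra) Ha Hb L1 L2 L3) as [R1 R2].
  - apply (cont_eps (fun t => Rpower t a * Rpower (1-t) b) y _ (deriv_pp a b y Hy)).
  - destruct (beta_rec a b Ha Hb) as [B1 _]. destruct (beta_props a b Ha Hb) as [_ [BP _]].
    unfold inc_beta_reg. rewrite B1.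
    set (J1 := improper_int (beta_integrand a (b + 1)) 0 y) in *.
    set (J2 := improper_int (beta_integrand a b) 0 y) in *.
    set (J3 := improper_int (beta_integrand (a+1) b) 0 y) in *.
    assert (E : J1 = (b * J2 + Rpower y a * Rpower (1 - y) b) / (a + b)).
    { apply Rmult_eq_reg_r with (a + b); try lra. field_simplify; try lra. rewrite R1 in R2 |- *. nra. }
    rewrite E. field. split; lra.
Qed.

Lemma sv_eq s l : infinite_sum s l -> series_value s = l.
Proof. intro H. unfold series_value. apply the_real_eq; auto. intros l' H'. apply (uniqueness_sum s); auto. Qed.

Definition sfun p x y b := fun j => / INR (Factorial.fact j) * (x / 2) ^ j * inc_beta_reg y (p + INR j) b.
Definition Kc p y b := Rpower y p * Rpower (1 - y) b / (b * Beta p b).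
Definition kterm A p x y := fun j => pochhammer A j / pochhammer p j * (x * y / 2) ^ j / INR (Factorial.fact j).

Lemma poch_pos a j : 0 < a -> 0 < pochhammer a j.
Proof. intro Ha. induction j; simpl. lra. apply Rmult_lt_0_compat; auto. assert (H := pos_INR j). lra. Qed.

Lemma incr_bounds y a b : 0 < a -> 0 < b -> 0 < y < 1 -> 0 <= inc_beta_reg y a b <= 1.
Proof. intros Ha Hb Hy. destruct (incb_props a b y Ha Hb Hy) as [_ [H1 H2]].
  destruct (beta_props a b Ha Hb) as [_ [BP _]]. unfold inc_beta_reg. split.
  - apply Rdiv_le_0_compat; lra.
  - apply Rmult_le_reg_r with (Beta a b); auto. unfold Rdiv. rewrite Rmult_assoc, Rinv_l by lra. lra. Qed.

Lemma S_conv p x y b : 0 < p -> 0 <= x -> 0 < y < 1 -> 0 < b ->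
  infinite_sum (sfun p x y b) (series_value (sfun p x y b)).
Proof. intros Hp Hx Hy Hb.
  destruct (Rseries_CV_comp (sfun p x y b) (fun i => / INR (Factorial.fact i) * (x/2) ^ i)) as [l Hl].
  - intro n. unfold sfun. assert (T : 0 <= / INR (Factorial.fact n) * (x / 2) ^ n).
    { apply Rmult_le_pos. left; apply Rinv_0_lt_compat, lt_0_INR, Factorial.lt_O_fact. apply pow_le; lra. }
    assert (I := incr_bounds y (p + INR n) b ltac:(assert (H := pos_INR n); lra) Hb Hy). nra.
  - destruct (exist_exp (x/2)) as [l Hl]. exists l. exact Hl.
  - rewrite (sv_eq _ l); exact Hl. Qed.

Lemma beta_shift p b j : 0 < p -> 0 < b ->
  Beta (p + INR j) b = Beta p b * pochhammer p j / pochhammer (p + b) j.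
Proof. intros Hp Hb. induction j.
  - simpl. rewrite Rplus_0_r. field.
  - rewrite S_INR. replace (p + (INR j + 1)) with ((p + INR j) + 1) by ring.
    assert (Hj := pos_INR j).
    destruct (beta_rec (p + INR j) b ltac:(lra) Hb) as [_ R]. rewrite R, IHj. simpl.
    assert (A1 := poch_pos p j Hp). assert (A2 := poch_pos (p + b) j ltac:(lra)).
    field. lra. Qed.

Lemma dterm_eq p x y b j : 0 < p -> 0 < y < 1 -> 0 < b ->
  sfun p x y (b+1) j - sfun p x y b j = Kc p y b * kterm (p + b) p x y j.
Proof. intros Hp Hy Hb. unfold sfun. assert (Hj := pos_INR j).
  rewrite incb_rec by lra. rewrite beta_shift by lra. unfold Kc, kterm.
  rewrite Rpower_plus, Rpower_pow by lra.
  destruct (beta_props p b Hp Hb) as [_ [BP _]].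
  assert (A1 := poch_pos p j Hp). assert (A2 := poch_pos (p + b) j ltac:(lra)).
  assert (F : 0 < INR (Factorial.fact j)) by apply lt_0_INR, Factorial.lt_O_fact.
  replace (x * y / 2) with (x / 2 * y) by field. rewrite Rpow_mult_distr.
  field. repeat split; lra. Qed.

Lemma Kc_pos p y b : 0 < p -> 0 < y < 1 -> 0 < b -> 0 < Kc p y b.
Proof. intros. destruct (beta_props p b) as [_ [BP _]]; auto. unfold Kc.
  apply Rdiv_lt_0_compat. apply Rmult_lt_0_compat; apply Rpower_pos. apply Rmult_lt_0_compat; auto. Qed.

Lemma kummer_val p x y b : 0 < p -> 0 <= x -> 0 < y < 1 -> 0 < b ->
  kummerM (p + b) p (x * y / 2) =
    (series_value (sfun p x y (b+1)) - series_value (sfun p x y b)) / Kc p y b /\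
  1 <= kummerM (p + b) p (x * y / 2).
Proof. intros Hp Hx Hy Hb.
  assert (KP := Kc_pos p y b Hp Hy Hb).
  assert (S1 := S_conv p x y (b+1) Hp Hx Hy ltac:(lra)). assert (S0 := S_conv p x y b Hp Hx Hy Hb).
  apply is_series_Reals in S1, S0.
  assert (D := is_series_minus _ _ _ _ S1 S0).
  assert (D2 := is_series_scal (/ Kc p y b) _ _ D).
  assert (K : is_series (kterm (p + b) p x y)
     ((series_value (sfun p x y (b+1)) - series_value (sfun p x y b)) / Kc p y b)).
  { replace ((series_value (sfun p x y (b+1)) - series_value (sfun p x y b)) / Kc p y b) with
     (scal (/ Kc p y b) (plus (series_value (sfun p x y (b + 1))) (opp (series_value (sfun p x y b))))).
    2:{ unfold scal, plus, opp; simpl. unfold mult; simpl. field. lra. }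
    eapply is_series_ext; [|exact D2]. intro n. simpl. unfold scal, plus, opp; simpl.
    unfold mult; simpl. change (sfun p x y (b + 1) n + - sfun p x y b n) with (sfun p x y (b + 1) n - sfun p x y b n).
    rewrite dterm_eq by lra. field. lra. }
  apply is_series_Reals in K.
  assert (KV : kummerM (p + b) p (x * y / 2) = (series_value (sfun p x y (b+1)) - series_value (sfun p x y b)) / Kc p y b).
  { unfold kummerM. apply sv_eq. exact K. }
  split; auto. rewrite KV.
  apply Rle_trans with (sum_f_R0 (kterm (p + b) p x y) 0).
  { simpl; unfold kterm; simpl; lra. }
  apply sum_incr. exact K.
  intro n. unfold kterm. assert (A1 := poch_pos p n Hp). assert (A2 := poch_pos (p + b) n ltac:(lra)).
  assert (F : 0 < INR (Factorial.fact n)) by apply lt_0_INR, Factorial.lt_O_fact.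
  apply Rdiv_le_0_compat; auto. apply Rmult_le_pos. apply Rdiv_le_0_compat; lra. apply pow_le.
  assert (0 <= x * y) by nra. lra. Qed.

Theorem mainTheorem6 (p x y q : R) :
  0 < p -> 0 <= x -> 0 < y < 1 -> 1 < q ->
  ncbeta p (q + 1) x y - (1 + cbar p q x y) * ncbeta p q x y
    + cbar p q x y * ncbeta p (q - 1) x y = 0 /\
  ncbeta_c p (q + 1) x y - (1 + cbar p q x y) * ncbeta_c p q x y
    + cbar p q x y * ncbeta_c p (q - 1) x y = 0.
Proof. intros Hp Hx Hy Hq.
  assert (NB : forall b, ncbeta p b x y = exp (- x / 2) * series_value (sfun p x y b)) by reflexivity.
  assert (Main : ncbeta p (q + 1) x y - (1 + cbar p q x y) * ncbeta p q x y
    + cbar p q x y * ncbeta p (q - 1) x y = 0).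
  { rewrite !NB.
    destruct (kummer_val p x y q Hp Hx Hy ltac:(lra)) as [KV1 M1].
    destruct (kummer_val p x y (q-1) Hp Hx Hy ltac:(lra)) as [KV0 M0].
    replace (q - 1 + 1) with q in KV0 by ring. replace (p + (q - 1)) with (p + q - 1) in KV0, M0 by ring.
    assert (K0P := Kc_pos p y (q-1) Hp Hy ltac:(lra)).
    assert (K1E : Kc p y q = (1 - y) * (p + q - 1) / q * Kc p y (q - 1)).
    { destruct (beta_rec p (q-1) Hp ltac:(lra)) as [BR _]. replace (q - 1 + 1) with q in BR by ring.
      destruct (beta_props p (q-1) Hp ltac:(lra)) as [_ [BP _]].
      assert (PW : Rpower (1 - y) q = Rpower (1 - y) (q - 1) * (1 - y)).
      { replace q with ((q - 1) + 1) at 1 by ring. rewrite Rpower_plus, Rpower_1 by lra. reflexivity. }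
      unfold Kc. rewrite BR, PW. field. repeat split; lra. }
    unfold cbar. rewrite KV1, KV0 in *. rewrite K1E.
    set (S0 := series_value (sfun p x y (q - 1))) in *.
    set (S1 := series_value (sfun p x y q)) in *.
    set (S2 := series_value (sfun p x y (q + 1))) in *.
    assert (D : S1 - S0 <> 0).
    { intro Z. rewrite Z in M0. unfold Rdiv in M0. rewrite Rmult_0_l in M0. lra. }
    field. repeat split; lra. }
  split; auto. unfold ncbeta_c. lra.
Qed.
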